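(* Let $M$ be an $m_1\times m_2\times m_3$ table with $m_1\ge m_2\ge m_3$, containing $m_1m_2m_3$ distinct (labeled) items, one in each cell. A shuffle operation arbitrarily permutes the items lying in a single column of $M$ in one of the three dimensions (i.e., the cells of a line parallel to one coordinate axis). Then for any two arrangements $S$ and $G$ of the items, $M$ can be taken from $S$ to $G$ using at most $m_1m_2+m_3(2m_2+m_1)+m_1m_2$ shuffles. *)

(* Defs.v *)
From mathcomp Require Import all_boot all_order all_fingroup.
Set Implicit Arguments. Unset Strict Implicit. Unset Printing Implicit Defensive.

(* Items are labeled; we identify the item set
   with the cell set (any bijective labeling), so an arrangement is a
   permutation A : {perm cell}: item x sits in cell A x. *)
Definition cell (m1 m2 m3 : nat) : finType := ('I_m1 * 'I_m2 * 'I_m3)%type.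

Definition on_line m1 m2 m3 (d : 'I_3) (c x : cell m1 m2 m3) : bool :=
  match val d with
  | 0 => (x.1.2 == c.1.2) && (x.2 == c.2)
  | 1 => (x.1.1 == c.1.1) && (x.2 == c.2)
  | _ => (x.1.1 == c.1.1) && (x.1.2 == c.1.2)
  end.

Definition is_shuffle m1 m2 m3 (s : {perm cell m1 m2 m3}) : Prop :=
  exists (d : 'I_3) (c : cell m1 m2 m3),
    forall x, ~~ on_line d c x -> s x = x.

(* Applying shuffle s to arrangement A moves the item in cell y to cell s y:
   the new arrangement is (A * s)%g, i.e. x |-> s (A x). *)
Definition apply_shuffles m1 m2 m3 (A : {perm cell m1 m2 m3})
  (ss : seq {perm cell m1 m2 m3}) : {perm cell m1 m2 m3} :=
  foldl (fun B s => (B * s)%g) A ss.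

(* Main.v *)
Require Import Defs.
From mathcomp Require Import all_boot all_order all_fingroup.
From mathcomp Require Import zify.
Set Implicit Arguments. Unset Strict Implicit. Unset Printing Implicit Defensive.

Section Hall.
Variables (X Y : finType) (r : X -> Y -> bool) (y0 : Y).

Definition nbh (S : {set X}) : {set Y} := [set y | [exists x in S, r x y]].

Lemma nbhS (S1 S2 : {set X}) : S1 \subset S2 -> nbh S1 \subset nbh S2.
Proof.
move=> sS; apply/subsetP=> y; rewrite !inE => /existsP[x /andP[xS rxy]].
by apply/existsP; exists x; rewrite (subsetP sS x xS).
Qed.

Lemma nbhU (S1 S2 : {set X}) : nbh (S1 :|: S2) = nbh S1 :|: nbh S2.
Proof.
apply/setP=> y; rewrite !inE; apply/existsP/orP.
  by case=> x /andP[]; rewrite inE => /orP[] h rxy; [left|right]; apply/existsP; exists x; rewrite h.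
by case=> /existsP[x /andP[h rxy]]; exists x; rewrite inE h ?orbT.
Qed.

Lemma hall_gen n : forall (Xs : {set X}) (Ys : {set Y}), #|Xs| <= n ->
  (forall S : {set X}, S \subset Xs -> #|S| <= #|nbh S :&: Ys|) ->
  exists f : X -> Y, (forall x, x \in Xs -> f x \in Ys /\ r x (f x)) /\
     {in Xs &, injective f}.
Proof.
elim: n => [|n IH] Xs Ys.
  rewrite leqn0 cards_eq0 => /eqP -> _.
  by exists (fun _ => y0); split=> [x|x y]; rewrite inE.
move=> cXs hall.
have [->|[x0 x0X]] := set_0Vmem Xs.
  by exists (fun _ => y0); split=> [x|x y]; rewrite inE.
case: (boolP [exists S : {set X}, [&& S \subset Xs, S != set0, S != Xs &
            #|nbh S :&: Ys| <= #|S|]]).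
  case/existsP=> S /and4P[sSX S0 SX tight].
  have ltS : #|S| <= n.
    have pr : S \proper Xs by rewrite properEneq SX sSX.
    have := proper_card pr; lia.
  have ltD : #|Xs :\: S| <= n.
    have := cardsID S Xs; rewrite (setIidPr sSX).
    have : 0 < #|S| by rewrite card_gt0.
    lia.
  have c1 : forall S' : {set X}, S' \subset S -> #|S'| <= #|nbh S' :&: (nbh S :&: Ys)|.
    move=> S' sS'.
    have := hall S' (subset_trans sS' sSX).
    by rewrite setIA (setIidPl (nbhS sS')).
  have [f1 [f1P f1i]] := IH S (nbh S :&: Ys) ltS c1.
  have c2 : forall T : {set X}, T \subset Xs :\: S -> #|T| <= #|nbh T :&: (Ys :\: nbh S)|.
    move=> T sT.
    have sTX : T \subset Xs by apply: subset_trans sT (subsetDl _ _).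
    have dTS : [disjoint T & S].
      rewrite -setI_eq0 -subset0; apply/subsetP=> x; rewrite !inE => /andP[/(subsetP sT)].
      by rewrite !inE => /andP[/negPf->].
    have sTS : T :|: S \subset Xs by rewrite subUset sTX sSX.
    have h1 := hall _ sTS.
    have e1 : #|T :|: S| = #|T| + #|S|.
      by apply/eqP; rewrite (leq_card_setU T S).2.
    have s1 : nbh (T :|: S) :&: Ys \subset (nbh T :&: (Ys :\: nbh S)) :|: (nbh S :&: Ys).
      apply/subsetP=> y; rewrite nbhU !(in_setU, in_setI, in_setD).
      by case: (y \in nbh S); case: (y \in nbh T); case: (y \in Ys).
    have := subset_leq_card s1.
    have := (leq_card_setU (nbh T :&: (Ys :\: nbh S)) (nbh S :&: Ys)).1.
    lia.
  have [f2 [f2P f2i]] := IH (Xs :\: S) (Ys :\: nbh S) ltD c2.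
  exists (fun x => if x \in S then f1 x else f2 x); split.
    move=> x xX; case: ifP => xS.
      by have [] := f1P x xS; rewrite inE => /andP[].
    have [] := f2P x; first by rewrite inE xS.
    by rewrite inE => /andP[].
  move=> x y xX yX /=.
  case: ifP => xS; case: ifP => yS.
  - by apply: f1i.
  - have [] := f1P x xS; have [] := f2P y; first by rewrite inE yS.
    by rewrite in_setD in_setI => /andP[h _] _ /andP[h' _] _ e; rewrite -e h' in h.
  - have [] := f1P y yS; have [] := f2P x; first by rewrite inE xS.
    by rewrite in_setD in_setI => /andP[h _] _ /andP[h' _] _ e; rewrite e h' in h.
  - by apply: (f2i x y); rewrite ?inE ?xS ?yS ?xX ?yX.
move=> /existsPn notight.
have := hall [set x0]; rewrite sub1set x0X cards1 card_gt0 => /(_ isT).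
case/set0Pn=> y1; rewrite !inE => /andP[/existsP[x' /andP[]]]; rewrite inE => /eqP-> rx0 y1Y.
have ltD : #|Xs :\ x0| <= n by have := cardsD1 x0 Xs; rewrite x0X; lia.
have c3 : forall T : {set X}, T \subset Xs :\ x0 -> #|T| <= #|nbh T :&: (Ys :\ y1)|.
  move=> T sT.
  have [->|T0] := eqVneq T set0; first by rewrite cards0.
  have sTX : T \subset Xs by apply: subset_trans sT (subsetDl _ _).
  have TX : T != Xs.
    apply/eqP=> eTX; move: sT; rewrite eTX => /subsetP /(_ x0 x0X).
    by rewrite !inE eqxx.
  have := notight T; rewrite sTX T0 TX /= -ltnNge => h.
  have s1 : nbh T :&: Ys \subset (nbh T :&: (Ys :\ y1)) :|: [set y1].
    apply/subsetP=> y; rewrite !(in_setU, in_setI, in_setD1, in_set1).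
    by case: (y == y1); case: (y \in nbh T); case: (y \in Ys).
  have := subset_leq_card s1.
  have := (leq_card_setU (nbh T :&: (Ys :\ y1)) [set y1]).1.
  rewrite cards1; lia.
have [f [fP fi]] := IH (Xs :\ x0) (Ys :\ y1) ltD c3.
exists (fun x => if x == x0 then y1 else f x); split.
  move=> x xX; case: eqP => [->|/eqP xx0]; first by [].
  by have [] := fP x; rewrite !inE ?xx0 // => /andP[].
move=> x y xX yX /=.
case: eqP => [->|/eqP xx0]; case: eqP => [->|/eqP yx0] //.
- by have [] := fP y; rewrite !inE ?yx0 // => /andP[h _] _ e; rewrite e eqxx in h.
- by have [] := fP x; rewrite !inE ?xx0 // => /andP[h _] _ e; rewrite e eqxx in h.
- by apply: (fi x y); rewrite ?inE ?xx0 ?yx0 ?xX ?yX.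
Qed.

Lemma hall :
  (forall S : {set X}, #|S| <= #|nbh S|) ->
  exists f : X -> Y, (forall x, r x (f x)) /\ injective f.
Proof.
move=> h.
have c : forall S : {set X}, S \subset setT -> #|S| <= #|nbh S :&: setT|.
  by move=> S _; rewrite setIT.
have [f [fP fi]] := @hall_gen #|X| setT setT (max_card _) c.
exists f; split=> [x|x y e]; first by have [] := fP x (in_setT x).
by apply: fi; rewrite ?in_setT.
Qed.
End Hall.
Section Color.
Variables (T K : finType) (L R : T -> K).

Lemma card_fib (E : {set T}) (F : T -> K) (S : {set K}) :
  #|[set x in E | F x \in S]| = \sum_(k in S) #|[set x in E | F x == k]|.
Proof.
rewrite -sum1_card (partition_big F (mem S)) /=; last by move=> x; rewrite inE => /andP[].
apply: eq_bigr => k kS; rewrite -sum1_card; apply: eq_bigl => x.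
rewrite !inE; case: eqP => [->|]; by rewrite ?kS ?andbT ?andbF.
Qed.

Lemma card1_uniq (A : {set T}) x y : #|A| = 1 -> x \in A -> y \in A -> x = y.
Proof.
move/eqP/cards1P=> [a ->]; rewrite !inE => /eqP -> /eqP -> //.
Qed.

Lemma matching d (E : {set T}) : 0 < d ->
  (forall k, #|[set x in E | L x == k]| = d) ->
  (forall k, #|[set x in E | R x == k]| = d) ->
  exists M : {set T}, [/\ M \subset E,
    (forall k, #|[set x in M | L x == k]| = 1) &
    (forall k, #|[set x in M | R x == k]| = 1)].
Proof.
move=> d0 hL hR.
case: (pickP (@predT K)) => [k0 _|noK]; last first.
  by exists set0; split=> [|k|k]; [exact: sub0set | have := noK k | have := noK k].
pose r k k' := [exists x in E, (L x == k) && (R x == k')].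
have hS : forall S : {set K}, #|S| <= #|nbh r S|.
  move=> S; rewrite -(leq_pmul2l d0) ![d * _]mulnC -!sum_nat_const.
  have e1 : \sum_(k in S) d = #|[set x in E | L x \in S]|.
    by rewrite card_fib; apply: eq_bigr => k _; rewrite hL.
  have e2 : \sum_(k in nbh r S) d = #|[set x in E | R x \in nbh r S]|.
    by rewrite card_fib; apply: eq_bigr => k _; rewrite hR.
  rewrite e1 e2; apply: subset_leq_card; apply/subsetP=> x; rewrite !inE.
  case/andP=> xE LS; rewrite xE /=; apply/existsP; exists (L x); rewrite LS /=.
  by apply/existsP; exists x; rewrite xE !eqxx.
have [f [fr fi]] := hall k0 hS.
pose g k := xchoose (existsP (fr k)).
have gP k : [/\ g k \in E, L (g k) = k & R (g k) = f k].
  by have /andP[-> /andP[/eqP -> /eqP ->]] := xchooseP (existsP (fr k)).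
exists (g @: setT); split.
- by apply/subsetP=> x /imsetP[k _ ->]; have [] := gP k.
- move=> k; rewrite (_ : [set x in g @: setT | L x == k] = [set g k]) ?cards1 //.
  apply/setP=> x; rewrite !inE.
  apply/andP/eqP => [[/imsetP[k' _ ->] /eqP]|->].
    by have [_ -> _] := gP k' => ->.
  by split; [apply: imset_f | have [_ -> _] := gP k].
- move=> k; have [finv fK fKV] := injF_bij fi.
  rewrite (_ : [set x in g @: setT | R x == k] = [set g (finv k)]) ?cards1 //.
  apply/setP=> x; rewrite !inE.
  apply/andP/eqP => [[/imsetP[k' _ ->] /eqP]|->].
    by have [_ _ ->] := gP k' => <-; rewrite fK.
  by split; [apply: imset_f | have [_ _ ->] := gP (finv k); rewrite fKV].
Qed.

Lemma coloring d : forall (E : {set T}),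
  (forall k, #|[set x in E | L x == k]| = d) ->
  (forall k, #|[set x in E | R x == k]| = d) ->
  exists c : T -> nat, [/\ forall x, x \in E -> c x < d,
     {in E &, forall x y, L x = L y -> c x = c y -> x = y} &
     {in E &, forall x y, R x = R y -> c x = c y -> x = y}].
Proof.
elim: d => [|d IH] E hL hR.
  have E0 : E = set0.
    apply/setP=> x; rewrite inE; apply/negP=> xE.
    have : 0 < #|[set y in E | L y == L x]|.
      by apply/card_gt0P; exists x; rewrite inE xE eqxx.
    by rewrite hL.
  by exists (fun _ => 0); split=> [x|x y|x y]; rewrite E0 inE.
have [M [sME hML hMR]] := matching (ltn0Sn d) hL hR.
have cD (F : T -> K) k : #|[set x in E | F x == k]| = d.+1 ->
    #|[set x in M | F x == k]| = 1 -> #|[set x in E :\: M | F x == k]| = d.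
  move=> h1 h2.
  have e : [set x in E | F x == k] = [set x in E :\: M | F x == k] :|: [set x in M | F x == k].
    apply/setP=> x; rewrite !inE; case xM: (x \in M); rewrite ?(subsetP sME x xM) //=.
    by rewrite ?andbF ?orbF.
  have dj : [set x in E :\: M | F x == k] :&: [set x in M | F x == k] = set0.
    apply/setP=> x; rewrite !inE.
    by case: (x \in M); rewrite ?andbF.
  move: h1; rewrite e.
  rewrite cardsU dj cards0 subn0 h2 addn1 => [[]] //.
have [c [cd cL cR]] := IH (E :\: M) (fun k => cD L k (hL k) (hML k))
                                    (fun k => cD R k (hR k) (hMR k)).
exists (fun x => if x \in M then d else c x); split.
- move=> x xE; case: ifP => xM; first by [].
  by apply: ltnW; apply: cd; rewrite inE xM xE.
- move=> x y xE yE eL /=.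
  case: ifP => xM; case: ifP => yM.
  + by move=> _; apply: (card1_uniq (hML (L x))); rewrite inE ?xM ?yM eL eqxx.
  + by move=> e; have := cd y; rewrite inE yM yE -e ltnn => /(_ isT).
  + by move=> e; have := cd x; rewrite inE xM xE e ltnn => /(_ isT).
  + by apply: cL => //; rewrite inE ?xM ?yM ?xE ?yE.
- move=> x y xE yE eL /=.
  case: ifP => xM; case: ifP => yM.
  + by move=> _; apply: (card1_uniq (hMR (R x))); rewrite inE ?xM ?yM eL eqxx.
  + by move=> e; have := cd y; rewrite inE yM yE -e ltnn => /(_ isT).
  + by move=> e; have := cd x; rewrite inE xM xE e ltnn => /(_ isT).
  + by apply: cR => //; rewrite inE ?xM ?yM ?xE ?yE.
Qed.
End Color.
Section Clos.
Variables (T A B Z : finType) (a : T -> A) (b : T -> B) (z : T -> Z)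
  (gi : A -> B -> Z -> T).
Hypotheses (giK : forall x, gi (a x) (b x) (z x) = x)
  (ga : forall p q w, a (gi p q w) = p) (gb : forall p q w, b (gi p q w) = q)
  (gz : forall p q w, z (gi p q w) = w).

Lemma clos (pi : {perm T}) : (forall x, z (pi x) = z x) ->
  exists t1 rho t2 : {perm T}, [/\ pi = (t1 * rho * t2)%g,
    forall x, (b (t1 x), z (t1 x)) = (b x, z x),
    forall x, (b (t2 x), z (t2 x)) = (b x, z x) &
    forall x, (a (rho x), z (rho x)) = (a x, z x)].
Proof.
move=> piz.
pose L x := (b x, z x).
pose R x := (b (pi x), z x).
have fibL k : #|[set x in setT | L x == k]| = #|A|.
  case: k => q w.
  rewrite (_ : [set x in setT | L x == (q, w)] = [set gi p q w | p in setT]).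
    by rewrite card_imset ?cardsT // => p p' /(congr1 a); rewrite !ga.
  apply/setP=> x; rewrite !inE; apply/eqP/imsetP.
    by case=> <- <-; exists (a x); rewrite ?inE ?giK.
  by case=> p _ ->; rewrite /L gb gz.
have fibR k : #|[set x in setT | R x == k]| = #|A|.
  rewrite -(fibL k) (_ : [set x in setT | R x == k] = pi @^-1: [set x in setT | L x == k]).
    by rewrite card_preimset //; apply: perm_inj.
  by apply/setP=> x; rewrite !inE /L /R piz.
have [c [cd cL cR]] := coloring fibL fibR.
pose col x : A := enum_val (Ordinal (cd x (in_setT x))).
have colI x y : col x = col y -> c x = c y.
  by move/enum_val_inj/(congr1 val).
pose t1 x := gi (col x) (b x) (z x).
have t1i : injective t1.
  move=> x y e.
  have e1 := congr1 a e; have e2 := congr1 b e; have e3 := congr1 z e.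
  rewrite /t1 !ga in e1; rewrite /t1 !gb in e2; rewrite /t1 !gz in e3.
  by apply: cL; rewrite ?in_setT ?(colI _ _ e1) // /L e2 e3.
pose h x := gi (col x) (b (pi x)) (z x).
have hi : injective h.
  move=> x y e.
  have e1 := congr1 a e; have e2 := congr1 b e; have e3 := congr1 z e.
  rewrite /h !ga in e1; rewrite /h !gb in e2; rewrite /h !gz in e3.
  by apply: cR; rewrite ?in_setT ?(colI _ _ e1) // /R e2 e3.
pose T1 := perm t1i; pose H := perm hi.
exists T1, (T1^-1 * H)%g, (H^-1 * pi)%g; split.
- by apply/permP=> x; rewrite !permM !permK.
- by move=> x; rewrite permE /t1 gb gz.
- move=> x; rewrite permM; set y := (H^-1)%g x.
  have -> : x = H y by rewrite /y permKV.
  by rewrite permE /h gb gz piz.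
- move=> x; rewrite permM; set y := (T1^-1)%g x.
  have -> : x = T1 y by rewrite /y permKV.
  by rewrite !permE /h /t1 !ga !gz.
Qed.
End Clos.
Section Shuf.
Variables m1 m2 m3 : nat.
Local Notation C := (cell m1 m2 m3).

Definition prodp (ss : seq {perm C}) := apply_shuffles 1%g ss.

Lemma apply_mul (A0 : {perm C}) ss : apply_shuffles A0 ss = (A0 * prodp ss)%g.
Proof.
rewrite /prodp; elim: ss A0 => [|s ss IH] A0 /=; first by rewrite mulg1.
by rewrite IH [apply_shuffles (1 * s)%g ss]IH mul1g mulgA.
Qed.

Lemma prodp_cat ss1 ss2 : prodp (ss1 ++ ss2) = (prodp ss1 * prodp ss2)%g.
Proof. by rewrite {1}/prodp /apply_shuffles foldl_cat -/(apply_shuffles _ _) apply_mul. Qed.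

Definition decomp n (sg : {perm C}) := exists ss : seq {perm C},
  [/\ forall s, s \in ss -> is_shuffle s, size ss <= n & prodp ss = sg].

Lemma decomp_mul n1 n2 s1 s2 : decomp n1 s1 -> decomp n2 s2 -> decomp (n1 + n2) (s1 * s2)%g.
Proof.
move=> [ss1 [h1 z1 p1]] [ss2 [h2 z2 p2]]; exists (ss1 ++ ss2); split.
- by move=> s; rewrite mem_cat => /orP[/h1|/h2].
- by rewrite size_cat leq_add.
- by rewrite prodp_cat p1 p2.
Qed.

Lemma decomp_le n n' s : decomp n s -> n <= n' -> decomp n' s.
Proof. by move=> [ss [h z p]] le; exists ss; split=> //; apply: leq_trans le. Qed.

Section Fiber.
Variables (K : finType) (k : C -> K) (d : 'I_3).
Hypothesis hk : forall x y, k x = k y -> on_line d x y.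
Variable sg : {perm C}.
Hypothesis hs : forall x, k (sg x) = k x.

Lemma restr_inj (Ks : {set K}) : injective (fun x => if k x \in Ks then sg x else x).
Proof.
move=> x y /=; case: ifP => xK; case: ifP => yK.
- by apply: perm_inj.
- by move=> e; move: yK; rewrite -e hs xK.
- by move=> e; move: xK; rewrite e hs yK.
- by [].
Qed.

Definition restr Ks := perm (@restr_inj Ks).

Lemma decomp_restr n : forall Ks : {set K}, #|Ks| <= n -> decomp #|Ks| (restr Ks).
Proof.
elim: n => [|n IH] Ks.
  rewrite leqn0 cards_eq0 => /eqP ->; exists [::]; split=> //.
  by apply/permP=> x; rewrite /prodp /= perm1 /restr permE inE.
have [->|[ka kaK]] := set_0Vmem Ks.
  move=> _; exists [::]; split=> //.
  by apply/permP=> x; rewrite /prodp /= perm1 /restr permE inE.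
move=> cK.
have cD := cardsD1 ka Ks; rewrite kaK in cD.
have e : restr Ks = (restr (Ks :\ ka) * restr [set ka])%g.
  apply/permP=> x; rewrite permM !permE /= !inE.
  case: (eqVneq (k x) ka) => [ex|nx] /=.
    by rewrite ex eqxx kaK.
  case xK: (k x \in Ks) => /=; last by rewrite (negPf nx).
  by rewrite hs (negPf nx).
rewrite e cD addnC; apply: decomp_mul.
  apply: IH; move: cK; rewrite cD; lia.
case: (eqVneq (restr [set ka]) 1%g) => [->|ne].
  by exists [::]; split.
exists [:: restr [set ka]]; split=> //.
move=> s; rewrite inE => /eqP ->.
have [x0 hx0] : exists x0, restr [set ka] x0 != x0.
  apply/existsP; apply: contraR ne => /existsPn h; apply/eqP/permP=> x.
  by rewrite perm1; apply/eqP; move: (h x); rewrite negbK.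
have kx0 : k x0 = ka.
  by move: hx0; rewrite permE inE; case: (k x0 =P ka) => // _; rewrite eqxx.
exists d, x0 => x; apply: contraNeq; rewrite permE inE.
case: (k x =P ka) => [kx _|_]; last by rewrite eqxx.
by apply: hk; rewrite kx0 kx.
by rewrite /prodp /= mul1g.
Qed.

Lemma decomp_fiber : decomp #|K| sg.
Proof.
have -> : sg = restr setT by apply/permP=> x; rewrite permE inE.
by rewrite -cardsT; apply: decomp_restr.
Qed.
End Fiber.
End Shuf.

Unset Implicit Arguments.
Set Strict Implicit.

Theorem mainTheorem10 (m1 m2 m3 : nat) (h12 : m2 <= m1) (h23 : m3 <= m2)
  (S G : {perm cell m1 m2 m3}) :
  exists ss : seq {perm cell m1 m2 m3},
    [/\ (forall s, s \in ss -> is_shuffle s),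
        size ss <= m1 * m2 + m3 * (2 * m2 + m1) + m1 * m2
      & apply_shuffles S ss = G].
Proof.
pose pi := (S^-1 * G)%g.
suff [ss [h1 h2 h3]] : decomp (m1 * m2 + m3 * (2 * m2 + m1) + m1 * m2) pi.
  exists ss; split=> //; rewrite apply_mul h3 /pi mulgA mulgV mul1g //.
pose C := cell m1 m2 m3.
have K1 : forall x : C, (x.1, x.2) = x by case.
have U : forall (p : 'I_m3) (q : 'I_m1 * 'I_m2) (w : unit), tt = w by move=> _ _ [].
have K2 : forall x : C, ((x.1.1, x.1.2), x.2) = x by case=> [[]].
have [t1 [rho [t2 [epi ht1 ht2 hrho]]]] :=
  @clos C 'I_m3 ('I_m1 * 'I_m2)%type unit (fun x => x.2) (fun x => x.1) (fun _ => tt)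
    (fun p q _ => (q, p)) K1 (fun _ _ _ => erefl)
    (fun _ _ _ => erefl) U pi (fun _ => erefl).
have rz : forall x : C, (rho x).2 = x.2 by move=> x; have [] := hrho x.
have [u1 [rho' [u2 [erho hu1 hu2 hrho']]]] :=
  @clos C 'I_m1 'I_m2 'I_m3 (fun x => x.1.1) (fun x => x.1.2) (fun x => x.2)
    (fun p q w => ((p, q), w)) K2
    (fun _ _ _ => erefl) (fun _ _ _ => erefl) (fun _ _ _ => erefl) rho rz.
pose ax0 : 'I_3 := @Ordinal 3 0 isT.
pose ax1 : 'I_3 := @Ordinal 3 1 isT.
pose ax2 : 'I_3 := @Ordinal 3 2 isT.
have dA (t : {perm C}) : (forall x, (t x).1 = x.1) -> decomp (m1 * m2) t.
  move=> ht; apply: (@decomp_le _ _ _ #|{: 'I_m1 * 'I_m2}| _ t) ; last by rewrite card_prod !card_ord.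
  apply: (@decomp_fiber _ _ _ _ (fun x : C => x.1) ax2) => // x y e.
  by rewrite /on_line /= e !eqxx.
have dB (t : {perm C}) : (forall x, ((t x).1.2, (t x).2) = (x.1.2, x.2)) -> decomp (m2 * m3) t.
  move=> ht; apply: (@decomp_le _ _ _ #|{: 'I_m2 * 'I_m3}| _ t) ; last by rewrite card_prod !card_ord.
  apply: (@decomp_fiber _ _ _ _ (fun x : C => (x.1.2, x.2)) ax0) => // x y [e1 e2].
  by rewrite /on_line /= e1 e2 !eqxx.
have dC (t : {perm C}) : (forall x, ((t x).1.1, (t x).2) = (x.1.1, x.2)) -> decomp (m1 * m3) t.
  move=> ht; apply: (@decomp_le _ _ _ #|{: 'I_m1 * 'I_m3}| _ t) ; last by rewrite card_prod !card_ord.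
  apply: (@decomp_fiber _ _ _ _ (fun x : C => (x.1.1, x.2)) ax1) => // x y [e1 e2].
  by rewrite /on_line /= e1 e2 !eqxx.
have -> : m1 * m2 + m3 * (2 * m2 + m1) + m1 * m2 =
   m1 * m2 + (m2 * m3 + m1 * m3 + m2 * m3) + m1 * m2 by nia.
rewrite epi; apply: decomp_mul; last by apply: dA => x; have [] := ht2 x.
apply: decomp_mul; first by apply: dA => x; have [] := ht1 x.
rewrite erho; apply: decomp_mul; last exact: dB.
by apply: decomp_mul; [exact: dB | exact: dC].
Qed.
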